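(* Let $a,b$ be coprime integers with $\tfrac{a}{b}<0$ and $-a>b>2$, and let $\mathcal{D}=\{0,1,\ldots,|a|-1\}$. Let $N=N_0\in\mathbb{Z}$ and define integers $N_1,N_2,\ldots$ and digits $d_0,d_1,\ldots\in\mathcal{D}$ recursively by $$bN_j=aN_{j+1}+d_j,$$ where $d_j\in\mathcal{D}$ is the unique digit with $d_j\equiv bN_j \pmod{a}$ (so that $N_{j+1}=(bN_j-d_j)/a\in\mathbb{Z}$). Then the sequence $(N_j)_{j\ge 0}$ is eventually zero. *)

(* Defs.v *)
From Stdlib Require Import ZArith.
Open Scope Z_scope.

Definition digit (a b N : Z) : Z := (b * N) mod (Z.abs a).

Definition step (a b N : Z) : Z := (b * N - digit a b N) / a.

Fixpoint Nseq (a b N : Z) (j : nat) : Z :=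
  match j with
  | O => N
  | S j' => step a b (Nseq a b N j')
  end.

(* Main.v *)
Require Import Defs.
From Stdlib Require Import ZArith Lia.
Open Scope Z_scope.

Lemma step_eq a b N : a < 0 -> step a b N = - (b * N / (- a)).
Proof.
  intros Ha. unfold step, digit.
  rewrite Z.abs_neq by lia.
  pose proof (Z.div_mod (b*N) (-a) ltac:(lia)) as E.
  set (q := b * N / - a) in *. set (r := b * N mod - a) in *.
  replace (b * N - r) with ((-q) * a) by lia.
  rewrite Z.div_mul by lia. reflexivity.
Qed.

Lemma step_bounds a b N : a < 0 -> 0 < b -> b < - a ->
  (0 < N -> - N < step a b N <= 0) /\ (N < 0 -> 0 < step a b N <= - N)
  /\ (N = 0 -> step a b N = 0).
Proof.
  intros Ha Hb Hab. rewrite step_eq by lia.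
  pose proof (Z.div_mod (b*N) (-a) ltac:(lia)) as E.
  pose proof (Z.mod_pos_bound (b*N) (-a) ltac:(lia)) as B.
  set (q := b * N / - a) in *. set (r := b * N mod - a) in *.
  split; [|split]; intros HN; nia.
Qed.

Lemma Nseq_S a b N j : Nseq a b N (S j) = Nseq a b (step a b N) j.
Proof.
  revert N; induction j; intros N; [reflexivity|].
  change (Nseq a b N (S (S j))) with (step a b (Nseq a b N (S j))).
  rewrite IHj. reflexivity.
Qed.

Lemma Nseq_zero a b j : a < 0 -> 0 < b -> b < - a -> Nseq a b 0 j = 0.
Proof.
  intros. induction j; [reflexivity|]. simpl. rewrite IHj.
  apply (step_bounds a b 0); lia.
Qed.

Lemma Nseq_add a b N j k : Nseq a b N (j + k) = Nseq a b (Nseq a b N j) k.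
Proof.
  revert N; induction j; intros N; [reflexivity|].
  rewrite Nat.add_succ_l, !Nseq_S. apply IHj.
Qed.

Lemma reach a b : a < 0 -> 0 < b -> b < - a ->
  forall n : nat, forall N, Z.abs N <= Z.of_nat n -> exists J, Nseq a b N J = 0.
Proof.
  intros Ha Hb Hab n. induction n; intros N HN.
  - exists O. simpl. lia.
  - destruct (Z.lt_trichotomy N 0) as [H|[H|H]].
    + destruct (step_bounds a b N Ha Hb Hab) as [_ [H2 _]].
      specialize (H2 H).
      set (P := step a b N) in *.
      destruct (step_bounds a b P Ha Hb Hab) as [H3 _].
      specialize (H3 (proj1 H2)).
      destruct (IHn (step a b P)) as [J HJ]. lia.
      exists (S (S J)). rewrite !Nseq_S. exact HJ.
    + exists O. simpl. exact H.
    + destruct (step_bounds a b N Ha Hb Hab) as [H2 _].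
      specialize (H2 H).
      destruct (IHn (step a b N)) as [J HJ]. lia.
      exists (S J). rewrite Nseq_S. exact HJ.
Qed.

Theorem mainTheorem1 (a b N : Z) :
  Z.gcd a b = 1 -> a * b < 0 -> - a > b -> b > 2 ->
  exists J : nat, forall j : nat, (J <= j)%nat -> Nseq a b N j = 0.
Proof.
  intros _ _ H1 H2.
  assert (Ha : a < 0) by lia.
  destruct (reach a b Ha ltac:(lia) ltac:(lia) (Z.to_nat (Z.abs N)) N ltac:(lia)) as [J HJ].
  exists J. intros j Hj.
  replace j with (J + (j - J))%nat by lia.
  rewrite Nseq_add, HJ. apply Nseq_zero; lia.
Qed.
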